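(* Let $\Omega\subset\mathbb{R}^3$ be a MAC compatible bounded domain and $\mathcal D=(\mathcal M,\mathcal E)$ a MAC grid of $\Omega$. For $i,j\in\{1,2,3\}$ define $\mathcal R^{(i,j)}_{\mathcal E}:H^{(i)}_{\mathcal E,0}\to H^{(j)}_{\mathcal E,0}$ by $\mathcal R^{(i,j)}_{\mathcal E}v=\sum_{\sigma\in\mathcal E^{(j)}_{\rm int}}(\mathcal R^{(i,j)}_{\mathcal E}v)_\sigma\mathbb 1_{D_\sigma}$, where $(\mathcal R^{(i,i)}_{\mathcal E}v)_\sigma=v_\sigma$ and, for $j\neq i$ and $\sigma=K|L\in\mathcal E^{(j)}_{\rm int}$, $(\mathcal R^{(i,j)}_{\mathcal E}v)_\sigma=\frac14\sum_{\sigma'\in\mathcal N_\sigma}v_{\sigma'}$ with $\mathcal N_\sigma=\{\sigma'\in\mathcal E^{(i)}:\sigma'\in\mathcal E(K)\cup\mathcal E(L)\}$. For $i\in\{1,2,3\}$ define $\mathcal R^{(i)}_{\mathcal M}:H^{(i)}_{\mathcal E}\to L_{\mathcal M}$ by $(\mathcal R^{(i)}_{\mathcal M}v)_K=\frac12\sum_{\sigma\in\mathcal E^{(i)}\cap\mathcal E(K)}v_\sigma$ on each $K$. Then there exists $C\ge0$, depending only on $\eta_{\mathcal M}$ and non-increasing with respect to it, such that for all $1\le q<\infty$ and all $i,j\in\{1,2,3\}$: $\|\mathcal R^{(i,j)}_{\mathcal E}v\|_{L^q(\Omega)}\le C\|v\|_{L^q(\Omega)}$ for all $v\in H^{(i)}_{\mathcal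 E,0}$, and $\|\mathcal R^{(i)}_{\mathcal M}v\|_{L^q(\Omega)}\le C\|v\|_{L^q(\Omega)}$ for all $v\in H^{(i)}_{\mathcal E}$.
   Context: MAC compatible domain: bounded connected open $\Omega$ whose closure is a finite union of closed rectangular parallelepipeds with faces orthogonal to the canonical basis $\boldsymbol e_1,\boldsymbol e_2,\boldsymbol e_3$. MAC grid: $\mathcal M$ a structured partition of $\Omega$ into rectangular parallelepipeds $K$; $\mathcal E$ the set of faces, $\mathcal E(K)$ the faces of $K$, $\mathcal E^{(i)}$ the faces orthogonal to $\boldsymbol e_i$ ($\mathcal E^{(i)}_{\rm int}$ interior ones); $\sigma=K|L$ the common face of $K,L$; $D_{K,\sigma}$ the half of $K$ adjacent to $\sigma$, dual cell $D_\sigma=D_{K,\sigma}\cup D_{L,\sigma}$ for $\sigma=K|L$, $D_\sigma=D_{K,\sigma}$ for boundary $\sigma$. $\boldsymbol x_\sigma$ mass centre of $\sigma$; $h_{\mathcal M}=\max_K\operatorname{diam}K$; $\eta_{\mathcal M}=\frac1{h_{\mathcal M}}\min_K\min_i\{|\boldsymbol x_\sigma-\boldsymbol x_{\sigma'}|:\sigma\ne\sigma'\in\mathcal E^{(i)}\cap\mathcal E(K)\}$. $L_{\mathcal M}$: functions constant on each cell. $H^{(i)}_{\mathcal E}$: functions constant on each $D_\sigma$, $\sigma\in\mathcal E^{(i)}$ (value $v_\sigma$); $H^{(i)}_{\mathcal E,0}$: those with $v_\sigma=0$ for boundary faces $\sigma$. *)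

(* Defs.v *)
From HB Require Import structures.
From mathcomp Require Import all_boot all_order all_algebra.
From mathcomp Require Import all_classical all_reals.
From mathcomp Require Import topology normedtype exp.
Set Implicit Arguments. Unset Strict Implicit. Unset Printing Implicit Defensive.
Import Order.TTheory GRing.Theory Num.Theory.
Import numFieldNormedType.Exports.
Local Open Scope classical_set_scope.
Local Open Scope ring_scope.

(* Raw data of a Cartesian (structured) grid in R^3 together with the set  *)
(* of its active cells.  Grid lines in direction k (k : 'I_3) are the      *)
(* reals  pts k 0 < pts k 1 < ... < pts k N.  A cell index (and a face     *)
(* index) is a triple K : 'I_3 -> 'I_N.+1 ; the cell K is the closed box   *)
(*   prod_k [pts k (K k), pts k (K k).+1].                                 *)
(* A face orthogonal to e_i is given by the pair (i, f); it is the set     *)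
(*   { x | x_i = pts i (f i), x_k in [pts k (f k), pts k (f k).+1], k<>i }. *)
Record mesh (R : realType) := Mesh {
  N : nat;
  pts : 'I_3 -> nat -> R;
  active : {set {ffun 'I_3 -> 'I_N.+1}}
}.

Definition cellT (R : realType) (G : mesh R) := {ffun 'I_3 -> 'I_(N G).+1}.

Section MAC.
Variables (R : realType) (G : mesh R).
Local Notation cell := (cellT G).

Definition cellbox (K : cell) : set 'rV[R]_3 :=
  [set x | forall k : 'I_3, pts G k (K k) <= x ord0 k <= pts G k (K k).+1].

Definition Omega : set 'rV[R]_3 :=
  interior (\bigcup_(K in [set K | K \in active G]) cellbox K).

Definition is_MAC_grid : Prop :=
  [/\ forall (k : 'I_3) (n : nat), (n < N G)%N -> pts G k n < pts G k n.+1,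
      forall K, K \in active G -> forall k, (K k < N G)%N,
      Omega !=set0 & connected Omega].

Definition width (k : 'I_3) (K : cell) : R := pts G k (K k).+1 - pts G k (K k).
Definition vol (K : cell) : R := \prod_(k < 3) width k K.

(* faceOf i f K : the face (i,f), orthogonal to e_i, belongs to E(K) *)
Definition faceOf (i : 'I_3) (f K : cell) : bool :=
  [forall k, (k != i) ==> (f k == K k)] &&
  ((f i == K i :> nat) || (f i == (K i).+1 :> nat)).

Definition inE (i : 'I_3) (f : cell) : bool :=
  [exists K in active G, faceOf i f K].

Definition inEint (i : 'I_3) (f : cell) : bool :=
  [exists K in active G, [exists L in active G,
     [&& K != L, faceOf i f K & faceOf i f L]]].

(* |D_sigma| : sum of the measures of the half cells D_{K,sigma} *)
Definition dualvol (i : 'I_3) (f : cell) : R :=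
  \sum_(K in active G | faceOf i f K) vol K / 2.

(* discrete functions: v : cell -> R, v f = v_sigma for sigma = (i,f).
   H^(i)_{E,0} : vanishing on boundary faces *)
Definition in_H0 (i : 'I_3) (v : cell -> R) : Prop :=
  forall f, inE i f -> ~~ inEint i f -> v f = 0.

(* L^q(Omega) norm of  sum_{sigma in E^(i)} v_sigma 1_{D_sigma} *)
Definition normE (i : 'I_3) (q : R) (v : cell -> R) : R :=
  (\sum_(f | inE i f) dualvol i f * (`|v f| `^ q)) `^ q^-1.

(* L^q(Omega) norm of  sum_{K in M} u_K 1_K *)
Definition normM (q : R) (u : cell -> R) : R :=
  (\sum_(K in active G) vol K * (`|u K| `^ q)) `^ q^-1.

Definition Rij (i j : 'I_3) (v : cell -> R) : cell -> R := fun s =>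
  if inEint j s then
    (if i == j then v s
     else 4^-1 * \sum_(s' | [exists K in active G, faceOf j s K && faceOf i s' K])
                    v s')
  else 0.

Definition RM (i : 'I_3) (v : cell -> R) : cell -> R := fun K =>
  2^-1 * \sum_(s | faceOf i s K) v s.

Definition dist3 (a b : 'I_3 -> R) : R := Num.sqrt (\sum_(k < 3) (a k - b k) ^+ 2).

(* mass centre x_sigma of the face sigma = (i,f) *)
Definition xface (i : 'I_3) (f : cell) : 'I_3 -> R := fun k =>
  if k == i then pts G k (f k) else (pts G k (f k) + pts G k (f k).+1) / 2.

Definition diam (K : cell) : R :=
  dist3 (fun k => pts G k (K k)) (fun k => pts G k (K k).+1).

Definition hM : R := \big[Num.max/0]_(K in active G) diam K.

(* eta_M = (1/h_M) min_K min_i { |x_s - x_s'| : s <> s' in E^(i) cap E(K) }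
   (the default value hM of the iterated min is never reached, since
    every such distance is <= diam K <= hM) *)
Definition etaM : R :=
  (\big[Num.min/hM]_(K in active G) \big[Num.min/hM]_(i < 3)
     \big[Num.min/hM]_(s | faceOf i s K) \big[Num.min/hM]_(s' | faceOf i s' K && (s != s'))
        dist3 (xface i s) (xface i s')) / hM.

End MAC.

Arguments cellbox {R} G K.
Arguments Omega {R} G.
Arguments is_MAC_grid {R} G.
Arguments width {R} G k K.
Arguments vol {R} G K.
Arguments faceOf {R} G i f K.
Arguments inE {R} G i f.
Arguments inEint {R} G i f.
Arguments dualvol {R} G i f.
Arguments in_H0 {R} G i v.
Arguments normE {R} G i q v.
Arguments normM {R} G q u.
Arguments Rij {R} G i j v.
Arguments RM {R} G i v.
Arguments xface {R} G i f.
Arguments diam {R} G K.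
Arguments hM {R} G.
Arguments etaM {R} G.

(* Main.v *)
Require Import Defs.
From HB Require Import structures.
From mathcomp Require Import all_boot all_order all_algebra.
From mathcomp Require Import all_classical all_reals.
From mathcomp Require Import topology normedtype exp.
From mathcomp Require Import zify ring.
Import Order.TTheory GRing.Theory Num.Theory.
Local Open Scope ring_scope.

Section Gen.
Variable R : realType.

Lemma sum_powR_le (T : finType) (P : pred T) (x : T -> R) (q : R) (n : nat) :
  1 <= q -> (forall t, 0 <= x t) -> (#|[pred t | P t]| <= n)%N ->
  (\sum_(t | P t) x t) `^ q <= n%:R `^ q * \sum_(t | P t) x t `^ q.
Proof.
move=> q1 x0 hn.
have q0 : q != 0 by rewrite gt_eqF // (lt_le_trans _ q1).
set M := \big[Num.max/0]_(t | P t) x t.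
have [M0 HM] : 0 <= M /\ M `^ q <= \sum_(t | P t) x t `^ q.
  rewrite /M; apply: (big_ind2 (fun m s => 0 <= m /\ m `^ q <= s)).
  - by rewrite powR0.
  - move=> a1 a2 b1 b2 [a0 ha] [b0 hb].
    have a20 : 0 <= a2 := le_trans (powR_ge0 _ _) ha.
    have b20 : 0 <= b2 := le_trans (powR_ge0 _ _) hb.
    split; first by rewrite le_max a0.
    have [hab|hab] := leP a1 b1.
    + by rewrite (le_trans hb) // lerDr.
    + by rewrite (le_trans ha) // lerDl.
  - by move=> t _; split.
have Hs : \sum_(t | P t) x t <= n%:R * M.
  apply: (@le_trans _ _ (\sum_(t | P t) M)).
    by apply: ler_sum => t Pt; exact: le_bigmax_cond.
  have -> : \sum_(t | P t) M = M *+ #|[pred t | P t]|.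
    by rewrite -sumr_const; apply: eq_bigl.
  by rewrite -(mulr_natl M) ler_wpM2r // ler_nat.
apply: (@le_trans _ _ ((n%:R * M) `^ q)).
  apply: ge0_ler_powR => //; first exact: le_trans ler01 q1.
  - by rewrite nnegrE sumr_ge0.
  - by rewrite nnegrE mulr_ge0.
by rewrite powRM // ler_wpM2l // powR_ge0.
Qed.

Lemma root_le (S1 S2 d e q : R) : 1 <= q -> 0 <= S1 -> 0 <= S2 -> 0 <= d -> 1 <= e ->
  S1 <= d `^ q * e * S2 -> S1 `^ q^-1 <= d * e * S2 `^ q^-1.
Proof.
move=> q1 S10 S20 d0 e1 H.
have q0 : 0 < q by rewrite (lt_le_trans _ q1).
have e0 : 0 <= e by rewrite (le_trans _ e1).
apply: (@le_trans _ _ ((d `^ q * e * S2) `^ q^-1)).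
  apply: ge0_ler_powR => //; first by rewrite invr_ge0 ltW.
  by rewrite nnegrE mulr_ge0 // mulr_ge0 // powR_ge0.
rewrite !powRM // ?mulr_ge0 ?powR_ge0 //.
rewrite -powRrM mulfV ?gt_eqF // powRr1 //.
rewrite ler_wpM2r ?powR_ge0 // ler_wpM2l //.
by rewrite ler1_powR // invf_le1.
Qed.

End Gen.

Section Mesh.
Variables (R : realType) (G : mesh R).
Local Notation cell := (cellT G).

Lemma faceP i (f K : cell) : faceOf G i f K ->
  (forall k, k != i -> f k = K k) /\
  (nat_of_ord (f i) = K i \/ nat_of_ord (f i) = (K i).+1).
Proof.
case/andP => /forallP H /orP H2; split.
  by move=> k kn; exact/eqP/(implyP (H k) kn).
by case: H2 => /eqP; auto.
Qed.

Lemma card_faces i (K : cell) : (#|[pred s : cell | faceOf G i s K]| <= 2)%N.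
Proof.
apply: (leq_trans _ (eq_leq card_bool)).
apply: (leq_card_in (fun s : cell => nat_of_ord (s i) == K i)).
move=> s s'; rewrite !inE => /faceP[h1 h2] /faceP[h1' h2'] /= e.
apply/ffunP => k; case: (eqVneq k i) => [->|kn]; last by rewrite h1 // h1'.
apply: val_inj => /=; move: e.
by case: h2 => ->; case: h2' => -> //; rewrite eqxx; lia.
Qed.

Lemma card_cells j (s : cell) : (#|[pred K : cell | faceOf G j s K]| <= 2)%N.
Proof.
apply: (leq_trans _ (eq_leq card_bool)).
apply: (leq_card_in (fun K : cell => nat_of_ord (s j) == K j)).
move=> K K'; rewrite !inE => /faceP[h1 h2] /faceP[h1' h2'] /= e.
apply/ffunP => k; case: (eqVneq k j) => [->|kn]; last by rewrite -h1 // h1'.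
apply: val_inj => /=; move: e.
case: h2 => h; case: h2' => h'; rewrite h in h' *; rewrite h' ?eqxx; lia.
Qed.


Hypothesis HG : is_MAC_grid G.

Lemma width_gt0 (K : cell) k : K \in active G -> 0 < width G k K.
Proof.
move: HG => [Hp Ha _ _] KA; rewrite /width subr_gt0; exact: Hp (Ha K KA k).
Qed.

Lemma vol_gt0 (K : cell) : K \in active G -> 0 < vol G K.
Proof. by move=> KA; rewrite /vol; apply: prodr_gt0 => k _; exact: width_gt0. Qed.

Lemma dualvol_ge0 i (s : cell) : 0 <= dualvol G i s.
Proof.
rewrite /dualvol; apply: sumr_ge0 => K /andP[KA _].
by rewrite divr_ge0 // ltW // vol_gt0.
Qed.

Lemma sum_vol i (s : cell) :
  \sum_(K | (K \in active G) && faceOf G i s K) vol G K = 2 * dualvol G i s.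
Proof. by rewrite /dualvol -mulr_suml mulrC divfK // pnatr_eq0. Qed.

Lemma key_exchange i (a : cell -> R) :
  \sum_(K in active G) \sum_(s | faceOf G i s K) vol G K * a s =
  2 * \sum_(s | Defs.inE G i s) dualvol G i s * a s.
Proof.
rewrite (exchange_big_dep (Defs.inE G i)) /=.
  rewrite mulr_sumr; apply: eq_bigr => s _.
  by rewrite -mulr_suml sum_vol mulrA.
by move=> K s KA fs; apply/existsP; exists K; rewrite KA fs.
Qed.


Lemma width_le_diam (K : cell) k : K \in active G -> width G k K <= diam G K.
Proof.
move=> KA; have w0 := ltW (width_gt0 _ k KA).
rewrite /diam /dist3 -(ger0_norm w0) -sqrtr_sqr ler_sqrt; last first.
  by apply: sumr_ge0 => l _; exact: sqr_ge0.
rewrite (bigD1 k) //= -[X in X <= _]addr0 lerD //.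
  by rewrite /width -opprB sqrrN.
by apply: sumr_ge0 => l _; exact: sqr_ge0.
Qed.

Lemma width_le_hM (K : cell) k : K \in active G -> width G k K <= hM G.
Proof.
move=> KA; apply: (le_trans (width_le_diam _ k KA)).
exact: le_bigmax_cond.
Qed.

Lemma active_ex : exists K : cell, K \in active G.
Proof.
move: HG => [_ _ [x /interior_subset [K KA _]] _].
by exists K.
Qed.

Lemma hM_pos : 0 < hM G.
Proof.
have [K KA] := active_ex.
exact: lt_le_trans (width_gt0 _ ord0 KA) (width_le_hM _ ord0 KA).
Qed.

Lemma dist_faces (K : cell) i s s' : K \in active G ->
  faceOf G i s K -> faceOf G i s' K -> s != s' ->
  dist3 (xface G i s) (xface G i s') = width G i K.
Proof.
move=> KA /faceP[h1 h2] /faceP[h1' h2'] ne.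
have w0 := ltW (width_gt0 _ i KA).
rewrite /dist3 (bigD1 i) //= big1 ?addr0; last first.
  move=> k kn; rewrite /xface (negbTE kn) h1 // h1' //.
  by rewrite subrr expr0n.
rewrite /xface eqxx.
have neq : nat_of_ord (s i) != s' i.
  apply: contra ne => /eqP e; apply/eqP/ffunP => k.
  case: (eqVneq k i) => [->|kn]; last by rewrite h1 // h1'.
  exact: val_inj.
move: neq; case: h2 => ->; case: h2' => -> //; rewrite ?eqxx // => _.
  by rewrite /width -opprB sqrrN sqrtr_sqr ger0_norm.
by rewrite /width sqrtr_sqr ger0_norm.
Qed.

Let m := \big[Num.min/hM G]_(K in active G) \big[Num.min/hM G]_(i < 3)
     \big[Num.min/hM G]_(s | faceOf G i s K)
     \big[Num.min/hM G]_(s' | faceOf G i s' K && (s != s'))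
        dist3 (xface G i s) (xface G i s').

Lemma m_pos : 0 < m.
Proof.
have h := hM_pos.
apply: lt_bigmin => // K KA; apply: lt_bigmin => // i _.
apply: lt_bigmin => // s fs; apply: lt_bigmin => // s' /andP[fs' ne].
by rewrite (dist_faces _ _ _ _ KA fs fs' ne) width_gt0.
Qed.

Lemma m_le (K : cell) k : K \in active G -> m <= width G k K.
Proof.
move=> KA.
move: HG => [_ Ha _ _].
have Kk := Ha K KA k.
pose s' : cell := [ffun l => if l == k then inord (K k).+1 else K l].
have fK : faceOf G k K K.
  by apply/andP; split; [apply/forallP => l; apply/implyP | rewrite eqxx].
have fs' : faceOf G k s' K.
  apply/andP; split.
    by apply/forallP => l; apply/implyP => ln; rewrite ffunE (negbTE ln).
  by rewrite ffunE eqxx inordK ?eqxx ?orbT //; lia.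
have ne : K != s'.
  apply/eqP => /ffunP/(_ k); rewrite ffunE eqxx => e.
  have := congr1 val e; rewrite /= inordK; [lia| by rewrite ltnS].
rewrite /m.
eapply le_trans; first exact: (bigmin_le_cond _ _ KA).
eapply le_trans; first exact: (bigmin_le _ k _).
eapply le_trans; first exact: (@bigmin_le_cond _ _ _ (hM G) K (fun s => faceOf G k s K) _ fK).
have fne : faceOf G k s' K && (K != s') by rewrite fs' ne.
eapply le_trans; first exact: (@bigmin_le_cond _ _ _ (hM G) s' (fun s1 => faceOf G k s1 K && (K != s1)) _ fne).
by rewrite (dist_faces _ _ _ _ KA fK fs' ne).
Qed.

Lemma eta_pos : 0 < etaM G.
Proof. exact: divr_gt0 m_pos hM_pos. Qed.

Lemma eta_width (K : cell) k : K \in active G -> etaM G * hM G <= width G k K.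
Proof.
move=> KA; rewrite /etaM divfK ?gt_eqF ?hM_pos //; exact: m_le.
Qed.

Lemma eta_le1 : etaM G <= 1.
Proof.
have [K KA] := active_ex.
have := le_trans (eta_width _ ord0 KA) (width_le_hM _ ord0 KA).
by rewrite -{2}(mul1r (hM G)) ler_pM2r // hM_pos.
Qed.

Lemma vol_ratio j (s K L : cell) : K \in active G -> L \in active G ->
  faceOf G j s K -> faceOf G j s L -> vol G L <= (etaM G)^-1 * vol G K.
Proof.
move=> KA LA /faceP[hK _] /faceP[hL _].
have hp : \prod_(k < 3 | k != j) width G k L = \prod_(k < 3 | k != j) width G k K.
  apply: eq_bigr => k kn.
  have e : nat_of_ord (L k) = K k by rewrite -hL // hK.
  by rewrite /width e.
have hv : vol G L * width G j K = vol G K * width G j L.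
  rewrite /vol (bigD1 j) //= [in RHS](bigD1 j) //= hp; ring.
have h1 : hM G * (etaM G * vol G L) <= hM G * vol G K.
  apply: (@le_trans _ _ (width G j K * vol G L)).
    by rewrite mulrA [hM G * _]mulrC ler_wpM2r ?eta_width // ltW // vol_gt0.
  by rewrite mulrC hv [hM G * _]mulrC ler_wpM2l ?width_le_hM // ltW // vol_gt0.
move: h1; rewrite ler_pM2l ?hM_pos // => h1.
by rewrite -(ler_pM2l eta_pos) mulrA mulfV ?gt_eqF ?eta_pos // mul1r.
Qed.

Lemma dualvol_le j (s K : cell) : K \in active G -> faceOf G j s K ->
  dualvol G j s <= (etaM G)^-1 * vol G K.
Proof.
move=> KA fK; rewrite /dualvol.
apply: (@le_trans _ _ (\sum_(L | (L \in active G) && faceOf G j s L) ((etaM G)^-1 * vol G K / 2))).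
  apply: ler_sum => L /andP[LA fL]; rewrite ler_pM2r ?invr_gt0 //.
  exact: vol_ratio KA LA fK fL.
have -> : \sum_(L | (L \in active G) && faceOf G j s L) ((etaM G)^-1 * vol G K / 2)
   = ((etaM G)^-1 * vol G K / 2) *+ #|[pred L | (L \in active G) && faceOf G j s L]|.
  by rewrite -sumr_const; apply: eq_bigl.
have c : (#|[pred L | (L \in active G) && faceOf G j s L]| <= 2)%N.
  apply: (leq_trans _ (card_cells j s)); apply: subset_leq_card.
  by apply/fintype.subsetP => L; rewrite !inE => /andP[].
have x0 : 0 <= (etaM G)^-1 * vol G K / 2.
  by rewrite divr_ge0 // mulr_ge0 // ?invr_ge0 ltW // ?eta_pos ?vol_gt0.
apply: (@le_trans _ _ (((etaM G)^-1 * vol G K / 2) *+ 2)).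
  by rewrite -!(mulr_natl (_ / 2)) ler_wpM2r // ler_nat.
by rewrite -mulr_natl mulrC divfK // pnatr_eq0.
Qed.

Variables (q : R) (q1 : 1 <= q).

Let q0 : 0 < q. Proof. exact: lt_le_trans ltr01 q1. Qed.

Lemma powR_mono (x y : R) : 0 <= x -> x <= y -> x `^ q <= y `^ q.
Proof.
move=> x0 xy; apply: (@ge0_ler_powR R q (ltW q0)) => //; rewrite nnegrE //.
exact: le_trans x0 xy.
Qed.

Lemma card_act j (s : cell) :
  (#|[pred K : cell | (K \in active G) && faceOf G j s K]| <= 2)%N.
Proof.
apply: (leq_trans _ (card_cells j s)); apply: subset_leq_card.
by apply/fintype.subsetP => L; rewrite !inE => /andP[].
Qed.

Lemma RM_bound i (v : cell -> R) :
  \sum_(K in active G) vol G K * `|RM G i v K| `^ q <=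
  2 `^ q * 2 * \sum_(s | Defs.inE G i s) dualvol G i s * `|v s| `^ q.
Proof.
apply: (@le_trans _ _ (\sum_(K in active G) 2 `^ q *
   \sum_(s | faceOf G i s K) vol G K * `|v s| `^ q)).
  apply: ler_sum => K KA.
  rewrite -mulr_sumr mulrCA; apply: ler_wpM2l; first exact: ltW (vol_gt0 _ KA).
  apply: (@le_trans _ _ ((\sum_(s | faceOf G i s K) `|v s|) `^ q)).
    apply: powR_mono => //.
    rewrite /RM normrM ger0_norm ?invr_ge0 //.
    apply: le_trans (ler_piMl _ _) _; rewrite ?normr_ge0 ?invf_le1 ?ler1n //.
    exact: ler_norm_sum.
  apply: (sum_powR_le _ _ _ _ _ 2 q1) => //; exact: card_faces.
by rewrite -mulr_sumr key_exchange // mulrA.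
Qed.

Lemma Rij_term i j (v : cell -> R) s : i != j ->
  `|Rij G i j v s| `^ q <= 4 `^ q *
    \sum_(K | (K \in active G) && faceOf G j s K)
       \sum_(s' | faceOf G i s' K) `|v s'| `^ q.
Proof.
move=> ij; rewrite /Rij (negbTE ij).
case: ifP => _; last first.
  rewrite normr0 powR0 ?gt_eqF // mulr_ge0 ?powR_ge0 //.
  by apply: sumr_ge0 => K _; apply: sumr_ge0 => s' _; exact: powR_ge0.
apply: (@le_trans _ _ ((\sum_(K | (K \in active G) && faceOf G j s K)
       \sum_(s' | faceOf G i s' K) `|v s'|) `^ q)).
  apply: powR_mono => //.
  rewrite normrM ger0_norm ?invr_ge0 //.
  apply: le_trans (ler_piMl _ _) _; rewrite ?normr_ge0 ?invf_le1 ?ler1n //.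
  apply: le_trans (ler_norm_sum _ _ _) _.
  rewrite (exchange_big_dep
     (fun s' => [exists K in active G, faceOf G j s K && faceOf G i s' K])) /=;
     last first.
    by move=> K s' /andP[KA fj] fi; apply/existsP; exists K; rewrite KA fj fi.
  apply: ler_sum => s' /existsP[K0 /andP[K0A /andP[f1 f2]]].
  rewrite (bigD1 K0) /=; last by rewrite K0A f1 f2.
  by rewrite lerDl sumr_ge0.
apply: le_trans.
  apply: (sum_powR_le _ _ _ _ _ 2 q1) => //; last exact: card_act.
  by move=> K; apply: sumr_ge0.
have h : \sum_(K | (K \in active G) && faceOf G j s K)
       (\sum_(s' | faceOf G i s' K) `|v s'|) `^ q <=
     \sum_(K | (K \in active G) && faceOf G j s K)
       2%:R `^ q * \sum_(s' | faceOf G i s' K) `|v s'| `^ q.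
  apply: ler_sum => K _; apply: (sum_powR_le _ _ _ _ _ 2 q1) => //.
  exact: card_faces.
rewrite -mulr_sumr in h.
apply: le_trans (ler_wpM2l (powR_ge0 _ _) h) _.
rewrite mulrA -powRM //.
have -> : (2%:R * 2%:R : R) = 4 by rewrite -natrM.
by [].
Qed.

Lemma Rij_bound i j (v : cell -> R) : i != j ->
  \sum_(s | Defs.inE G j s) dualvol G j s * `|Rij G i j v s| `^ q <=
  4 `^ q * (4 * (etaM G)^-1) * \sum_(s | Defs.inE G i s) dualvol G i s * `|v s| `^ q.
Proof.
move=> ij.
apply: (@le_trans _ _ (\sum_(s | Defs.inE G j s) 4 `^ q *
   \sum_(K | (K \in active G) && faceOf G j s K)
       \sum_(s' | faceOf G i s' K) (etaM G)^-1 * (vol G K * `|v s'| `^ q))).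
  apply: ler_sum => s _.
  apply: le_trans (ler_wpM2l (dualvol_ge0 j s) (Rij_term _ _ v s ij)) _.
  rewrite mulrCA ler_wpM2l ?powR_ge0 // mulr_sumr.
  apply: ler_sum => K /andP[KA fK]; rewrite mulr_sumr.
  apply: ler_sum => s' _; rewrite mulrA ler_wpM2r ?powR_ge0 //.
  exact: dualvol_le.
rewrite -mulr_sumr -mulrA ler_wpM2l ?powR_ge0 //.
rewrite (exchange_big_dep (fun K => K \in active G)) /=; last by move=> s K _ /andP[].
apply: (@le_trans _ _ (\sum_(K in active G) 2 *
     \sum_(s' | faceOf G i s' K) (etaM G)^-1 * (vol G K * `|v s'| `^ q))).
  apply: ler_sum => K KA.
  set X := \sum_(s' | faceOf G i s' K) _.
  have X0 : 0 <= X.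
    apply: sumr_ge0 => s' _; apply: mulr_ge0; first by rewrite invr_ge0; exact: ltW eta_pos.
    by apply: mulr_ge0; [exact: ltW (vol_gt0 _ KA) | exact: powR_ge0].
  have -> : \sum_(s | Defs.inE G j s && ((K \in active G) && faceOf G j s K)) X =
     X *+ #|[pred s | Defs.inE G j s && ((K \in active G) && faceOf G j s K)]|.
    by rewrite -sumr_const; apply: eq_bigl.
  rewrite -(mulr_natl X) ler_wpM2r // ler_nat.
  apply: (leq_trans _ (card_faces j K)); apply: subset_leq_card.
  by apply/fintype.subsetP => s; rewrite !inE => /andP[_ /andP[]].
have e : forall K : cell, 2 * \sum_(s' | faceOf G i s' K) (etaM G)^-1 * (vol G K * `|v s'| `^ q)
   = (2 * (etaM G)^-1) * \sum_(s' | faceOf G i s' K) vol G K * `|v s'| `^ q.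
  by move=> K; rewrite -mulr_sumr mulrA.
rewrite (eq_bigr _ (fun K _ => e K)) -mulr_sumr key_exchange //.
rewrite le_eqVlt; apply/orP; left; apply/eqP; ring.
Qed.

End Mesh.

Definition Cfun {R : realType} (e : R) : R := 16 + 16 * `|e|^-1.

Lemma Cfun_ge0 {R : realType} (e : R) : 16 <= Cfun e.
Proof. by rewrite /Cfun lerDl mulr_ge0 // invr_ge0. Qed.

Theorem lemma7p1 (R : realType) :
  exists C : R -> R,
    (forall e : R, 0 <= C e) /\
    (forall e1 e2 : R, 0 < e1 -> e1 <= e2 -> C e2 <= C e1) /\
    (forall (G : mesh R), is_MAC_grid G ->
     forall q : R, 1 <= q ->
     forall i j : 'I_3,
       (forall v : cellT G -> R, in_H0 G i v ->
          normE G j q (Rij G i j v) <= C (etaM G) * normE G i q v) /\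
       (forall v : cellT G -> R,
          normM G q (RM G i v) <= C (etaM G) * normE G i q v)).
Proof.
exists (@Cfun R); split.
  by move=> e; apply: le_trans (Cfun_ge0 e).
split.
  move=> e1 e2 e10 le12; rewrite /Cfun lerD2l ler_wpM2l //.
  have e20 : 0 < e2 by exact: lt_le_trans le12.
  by rewrite !gtr0_norm // lef_pV2 ?posrE.
move=> G HG q q1 i j.
have q0 : 0 < q by exact: lt_le_trans ltr01 q1.
have et := eta_pos _ _ HG.
have C16 := Cfun_ge0 (etaM G).
split.
  move=> v _; rewrite /normE.
  set S2 := \sum_(s | Defs.inE G i s) dualvol G i s * `|v s| `^ q.
  have S20 : 0 <= S2.
    by apply: sumr_ge0 => s _; apply: mulr_ge0; [exact: dualvol_ge0 | exact: powR_ge0].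
  have S10 : 0 <= \sum_(s | Defs.inE G j s) dualvol G j s * `|Rij G i j v s| `^ q.
    by apply: sumr_ge0 => s _; apply: mulr_ge0; [exact: dualvol_ge0 | exact: powR_ge0].
  case: (eqVneq i j) => [eij|ij].
    subst j.
    have H : \sum_(s | Defs.inE G i s) dualvol G i s * `|Rij G i i v s| `^ q <=
             1 `^ q * 1 * S2.
      rewrite powR1 /= !mul1r; apply: ler_sum => s _.
      apply: ler_wpM2l; first exact: dualvol_ge0.
      rewrite /Rij eqxx; case: ifP => _ //.
      by rewrite normr0 powR0 ?gt_eqF // powR_ge0.
    apply: le_trans (@root_le R _ _ 1 1 q q1 S10 S20 ler01 (lexx _) H) _.
    rewrite !mul1r -{1}(mul1r (S2 `^ q^-1)) ler_wpM2r ?powR_ge0 //.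
    by apply: le_trans C16; rewrite ler1n.
  have H := Rij_bound _ _ HG _ q1 _ _ v ij.
  have e1 : 1 <= 4 * (etaM G)^-1.
    apply: (@le_trans _ _ (etaM G)^-1); first by rewrite invf_ge1 // eta_le1.
    by rewrite ler_peMl // ?invr_ge0 ?ler1n // ltW.
  apply: le_trans (@root_le R _ _ 4 (4 * (etaM G)^-1) q q1 S10 S20 _ e1 H) _ => //.
  rewrite ler_wpM2r ?powR_ge0 // /Cfun gtr0_norm // mulrA -natrM.
  by rewrite lerDr ?divr_ge0 // ltW.
move=> v; rewrite /normM /normE.
set S2 := \sum_(s | Defs.inE G i s) dualvol G i s * `|v s| `^ q.
have S20 : 0 <= S2.
  by apply: sumr_ge0 => s _; apply: mulr_ge0; [exact: dualvol_ge0 | exact: powR_ge0].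
have S10 : 0 <= \sum_(K in active G) vol G K * `|RM G i v K| `^ q.
  apply: sumr_ge0 => K KA; apply: mulr_ge0; last exact: powR_ge0.
  exact: ltW (vol_gt0 _ _ HG _ KA).
have H := RM_bound _ _ HG _ q1 i v.
apply: le_trans (@root_le R _ _ 2 2 q q1 S10 S20 _ _ H) _ => //; first by rewrite ler1n.
rewrite ler_wpM2r ?powR_ge0 // -natrM; apply: le_trans C16.
by rewrite ler_nat.
Qed.
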